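(* Let $p, \sigma \in \mathbb{R}$. The equation \[ -u''(x) = x^\sigma u(x)^p \quad \text{in } (0,+\infty) \] admits at least one non-trivial, non-negative solution $u \in C^2(0,+\infty)$ if and only if one of the following holds: (1) $\sigma < -2$ and $p > -1-\sigma$; or (2) $\sigma > -2$ and $p < -1-\sigma$.
   Context: Solutions are only required to be $C^2$ on the open half-line $(0,+\infty)$ and to satisfy the equation pointwise there; no continuity at $0$ is assumed. For $p=0$ the term $u^p$ is understood as $1$, and for $p<0$ it is required that $u>0$ on $(0,+\infty)$. *)

(* Defs.v *)
From HB Require Import structures.
From mathcomp Require Import all_boot all_order all_algebra.
From mathcomp Require Import all_classical all_reals all_analysis.
Set Implicit Arguments. Unset Strict Implicit. Unset Printing Implicit Defensive.
Import Order.TTheory GRing.Theory Num.Theory.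
Import numFieldNormedType.Exports.
Local Open Scope ring_scope.

Definition C2_pos (R : realType) (u : R -> R) : Prop :=
  forall x : R, 0 < x ->
    [/\ derivable u x 1, derivable (derive1 u) x 1 & {for x, continuous (derive1 (derive1 u))}].

(* u is a non-trivial non-negative C^2 solution of -u'' = x^sigma u^p on (0,+oo).
   powR a b = a `^ b: for a > 0 it is exp (b ln a); powR 0 0 = 1, powR 0 b = 0
   for b <> 0.  For p < 0 positivity of u on (0,+oo) is required. *)
Definition is_nontriv_nonneg_sol (R : realType) (p sigma : R) (u : R -> R) : Prop :=
  [/\ C2_pos u,
      (forall x : R, 0 < x -> 0 <= u x),
      (exists x : R, 0 < x /\ u x != 0),
      (p < 0 -> forall x : R, 0 < x -> 0 < u x) &
      (forall x : R, 0 < x -> - (derive1 (derive1 u)) x = powR x sigma * powR (u x) p)].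

(* Main.v *)
Require Import Defs.
From HB Require Import structures.
From mathcomp Require Import all_boot all_order all_algebra.
From mathcomp Require Import all_classical all_reals all_analysis.
From mathcomp Require Import ring lra.
Import Order.TTheory GRing.Theory Num.Theory.
Import numFieldNormedType.Exports.
Local Open Scope ring_scope.
Local Open Scope classical_set_scope.

Lemma mvt_pos {R : realType} {g : R -> R} (hg : forall x, 0 < x -> derivable g x 1) {a b : R} :
  0 < a -> a < b -> exists2 c, a < c < b & g b - g a = derive1 g c * (b - a).
Proof.
move=> a0 ab.
have h1 : forall x, x \in `]a, b[%R -> is_derive x 1 g (derive1 g x).
  move=> x; rewrite in_itv /= => /andP[ax xb]; rewrite derive1E.
  apply: derivableP; apply: hg; exact: lt_trans ax.
have h2 : {within `[a, b], continuous g}.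
  apply: derivable_within_continuous => x; rewrite in_itv/= => /andP[ax _].
  apply: hg; exact: lt_le_trans ax.
have [c cab E] := @MVT R g (derive1 g) a b ab h1 h2.
by exists c => //; move: cab; rewrite in_itv.
Qed.



Lemma arith_nc (R : realFieldType) (p sigma A k : R) (L : R -> R) :
  (forall t, 2 * t + sigma * t + p * L t - k <= L t) ->
  (forall t, 0 <= t -> A <= L t <= A + t) ->
  (forall t, t <= 0 -> A + t <= L t <= A) ->
  sigma + 2 = 0 \/ sigma + 2 = 1 - p \/ (sigma < -2 /\ p > -1 - sigma) \/ (sigma > -2 /\ p < -1 - sigma).
Proof.
move=> H Hp Hn.
set M := `|k| + `|(1 - p) * A| + 1.
have nk := ler_norm k; have nA := ler_norm ((1 - p) * A).
have M0 : 0 < M by rewrite /M; have := normr_ge0 k; have := normr_ge0 ((1 - p) * A); lra.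
have Mk : k < M by rewrite /M; have := normr_ge0 ((1 - p) * A); lra.
have Mbig : k + (1 - p) * A < M by rewrite /M; have := normr_ge0 k; lra.
clearbody M.
have Hs t : (sigma + 2) * t - k <= (1 - p) * L t by have := H t; lra.
have pick d : d != 0 -> d * (M / d) = M by move=> d0; field.
have ce : p = 1 -> sigma + 2 != 0 -> False.
  move=> p1 s0; have := Hs (M / (sigma + 2)); rewrite pick //; have : (1 - p) * L (M / (sigma + 2)) = 0 by rewrite p1; ring.
  lra.
have ca : p < 1 -> sigma + 2 < 0 -> False.
  move=> p1 s0; set t := M / (sigma + 2).
  have st : (sigma + 2) * t = M by rewrite pick // lt_eqF.
  have t0 : t <= 0 by nra.
  have /andP[_ l2] := Hn t t0.
  have : (1 - p) * L t <= (1 - p) * A by rewrite ler_wpM2l //; lra.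
  have := Hs t; lra.
have cb : p < 1 -> sigma + 2 > 1 - p -> False.
  move=> p1 s0; set t := M / (sigma + 2 - (1 - p)).
  have st : (sigma + 2 - (1 - p)) * t = M by rewrite pick // gt_eqF //; lra.
  have t0 : 0 <= t by nra.
  have /andP[_ l2] := Hp t t0.
  have : (1 - p) * L t <= (1 - p) * (A + t) by rewrite ler_wpM2l //; lra.
  have := Hs t; lra.
have cc : p > 1 -> sigma + 2 > 0 -> False.
  move=> p1 s0; set t := M / (sigma + 2).
  have st : (sigma + 2) * t = M by rewrite pick // gt_eqF.
  have t0 : 0 <= t by nra.
  have /andP[l1 _] := Hp t t0.
  have : (1 - p) * L t <= (1 - p) * A by rewrite ler_wnM2l //; lra.
  have := Hs t; lra.
have cd : p > 1 -> sigma + 2 < 1 - p -> False.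
  move=> p1 s0; set t := M / (sigma + 2 - (1 - p)).
  have st : (sigma + 2 - (1 - p)) * t = M by rewrite pick // lt_eqF //; lra.
  have t0 : t <= 0 by nra.
  have /andP[l1 _] := Hn t t0.
  have : (1 - p) * L t <= (1 - p) * (A + t) by rewrite ler_wnM2l //; lra.
  have := Hs t; lra.
case: (ltgtP (sigma + 2) 0) => s0; last by left.
- case: (ltgtP (sigma + 2) (1 - p)) => s1; last by right; left.
  + case: (ltgtP p 1) => p1; [exfalso; exact: ca | exfalso; exact: cd | exfalso; exact: (ce p1 (negbT (lt_eqF s0)))].
  + by right; right; left; split; lra.
- case: (ltgtP (sigma + 2) (1 - p)) => s1; last by right; left.
  + by right; right; right; split; lra.
  + case: (ltgtP p 1) => p1; [exfalso; exact: cb | exfalso; exact: cc | exfalso; exact: (ce p1 (negbT (gt_eqF s0)))].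
Qed.



Lemma archi_ex {R : realType} (a : R) {e : R} : 0 < e -> exists n : nat, a < n%:R * e.
Proof.
move=> e0; exists (Num.truncn (a / e)).+1.
have := truncnS_gt (a / e); rewrite -(ltr_pM2r e0) divfK ?gt_eqF //.
Qed.

Lemma dyad_up {R : realType} {h : R -> R} {e : R} :
  (forall x, 1 <= x -> h (2 * x) <= h x - e) -> forall n, h (2 ^+ n) <= h 1 - n%:R * e.
Proof.
move=> H; elim=> [|n IH]; first by rewrite expr0 mul0r subr0.
have h1 : (1 : R) <= 2 ^+ n by rewrite exprn_ege1 //; lra.
rewrite exprS; have := H _ h1; rewrite -natr1 mulrDl mul1r; lra.
Qed.

Lemma dyad_down {R : realType} {h : R -> R} {e b : R} : 0 < b ->
  (forall x, 0 < x <= b -> h (x / 2) <= h x - e) -> forall n, h (b / 2 ^+ n) <= h b - n%:R * e.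
Proof.
move=> b0 H; elim=> [|n IH]; first by rewrite expr0 divr1 mul0r subr0.
have h1 : (1 : R) <= 2 ^+ n by rewrite exprn_ege1 //; lra.
have h2 : (0 : R) < 2 ^+ n by rewrite exprn_gt0.
have e1 : b / 2 ^+ n.+1 = (b / 2 ^+ n) / 2.
  by rewrite exprS; field; rewrite gt_eqF.
have hx : 0 < b / 2 ^+ n <= b.
  apply/andP; split; first by rewrite divr_gt0.
  by rewrite ler_pdivrMr //; nra.
rewrite e1; have := H _ hx.
have -> : (n.+1)%:R = n%:R + 1 :> R by rewrite natr1.
lra.
Qed.


Lemma lerNnormr {R : realType} (x : R) : - `|x| <= x.
Proof. by have := ler_norm (- x); rewrite normrN; lra. Qed.

Lemma pl_bnd {R : realType} (p : R) {l lo hi : R} : lo <= l -> l <= hi ->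
  - (`|p| * (`|lo| + `|hi|)) <= p * l.
Proof.
move=> h1 h2.
have hl : `|l| <= `|lo| + `|hi|.
  rewrite ler_norml; have := ler_norm lo; have := ler_norm hi.
  have := lerNnormr lo; have := lerNnormr hi; have := normr_ge0 lo; have := normr_ge0 hi.
  move=> *; apply/andP; split; lra.
have := lerNnormr (p * l); rewrite normrM => h3.
have : `|p| * `|l| <= `|p| * (`|lo| + `|hi|) by rewrite ler_wpM2l.
lra.
Qed.

Lemma lb_div {R : realType} (a b c : R) : 0 < a -> b <= a * c -> b / a <= c.
Proof. by move=> a0 h; rewrite ler_pdivrMr // mulrC. Qed.

Lemma ub_div {R : realType} (a b c : R) : 0 < a -> a * c <= b -> c <= b / a.
Proof. by move=> a0 h; rewrite ler_pdivlMr // mulrC. Qed.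

Section Nec.
Variable R : realType.
Variables p sigma : R.
Variable u : R -> R.
Hypothesis hs : is_nontriv_nonneg_sol p sigma u.

Lemma d1 {x} : 0 < x -> derivable u x 1.
Proof. by case: hs => C _ _ _ _ x0; case: (C x x0). Qed.
Lemma d2 {x} : 0 < x -> derivable (derive1 u) x 1.
Proof. by case: hs => C _ _ _ _ x0; case: (C x x0). Qed.
Lemma ueq {x} : 0 < x -> - derive1 (derive1 u) x = powR x sigma * powR (u x) p.
Proof. by case: hs => _ _ _ _ E; apply: E. Qed.
Lemma u_ge0 {x} : 0 < x -> 0 <= u x.
Proof. by case: hs => _ H _ _ _; apply: H. Qed.

Lemma u2_le0 {x} : 0 < x -> derive1 (derive1 u) x <= 0.
Proof. by move=> x0; rewrite -oppr_ge0 ueq // mulr_ge0 // powR_ge0. Qed.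

Lemma u1_noninc {a b} : 0 < a -> a <= b -> derive1 u b <= derive1 u a.
Proof.
move=> a0; rewrite le_eqVlt => /predU1P[-> //|ab].
have [c /andP[ac cb] E] := mvt_pos (@d2) a0 ab.
have : derive1 (derive1 u) c * (b - a) <= 0.
  by rewrite mulr_le0_ge0 ?u2_le0 ?(lt_trans a0) // subr_ge0 ltW.
lra.
Qed.

Lemma concave_up {a b} : 0 < a -> a <= b -> u b <= u a + derive1 u a * (b - a).
Proof.
move=> a0; rewrite le_eqVlt => /predU1P[-> |ab]; first by rewrite subrr mulr0 addr0.
have [c /andP[ac cb] E] := mvt_pos (@d1) a0 ab.
have : derive1 u c * (b - a) <= derive1 u a * (b - a).
  by rewrite ler_pM2r ?subr_gt0 // u1_noninc // ltW.
lra.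
Qed.

Lemma concave_lo {a b} : 0 < a -> a <= b -> derive1 u b * (b - a) <= u b - u a.
Proof.
move=> a0; rewrite le_eqVlt => /predU1P[-> |ab]; first by rewrite subrr mulr0 subrr.
have [c /andP[ac cb] E] := mvt_pos (@d1) a0 ab.
have : derive1 u b * (b - a) <= derive1 u c * (b - a).
  by rewrite ler_pM2r ?subr_gt0 // u1_noninc ?(lt_trans a0) // ltW.
lra.
Qed.

Lemma u1_ge0 {x} : 0 < x -> 0 <= derive1 u x.
Proof.
move=> x0; rewrite leNgt; apply/negP => neg.
have ux := u_ge0 x0.
set y := x + (u x + 1) / (- derive1 u x).
have hq : 0 < (u x + 1) / (- derive1 u x) by rewrite divr_gt0 // ?oppr_gt0; lra.
have xy : x <= y by rewrite /y; lra.
have := concave_up x0 xy.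
have -> : derive1 u x * (y - x) = - (u x + 1).
  rewrite /y addrAC subrr add0r; field; lra.
have := u_ge0 (lt_le_trans x0 xy); lra.
Qed.

Lemma u_mono {a b} : 0 < a -> a <= b -> u a <= u b.
Proof.
move=> a0 ab; have := concave_lo a0 ab.
have : 0 <= derive1 u b * (b - a) by rewrite mulr_ge0 ?u1_ge0 ?(lt_le_trans a0) // subr_ge0.
lra.
Qed.

Lemma u_pos {x} : 0 < x -> 0 < u x.
Proof.
move=> x0; rewrite lt_def u_ge0 // andbT; apply/negP => /eqP ux0.
have y0 : 0 < x / 2 by rewrite divr_gt0.
have yx : x / 2 < x by lra.
have uy : u (x / 2) = 0.
  by apply/eqP; rewrite eq_le u_ge0 // andbT -ux0 u_mono // ltW.
have [c /andP[yc cx] E] := mvt_pos (@d1) y0 yx.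
have c0 : 0 < c by exact: lt_trans y0 yc.
have u1c : derive1 u c = 0.
  move: E; rewrite ux0 uy subrr => /esym /eqP; rewrite mulf_eq0 => /orP[/eqP //|].
  by rewrite subr_eq0 => /eqP h; move: yx; rewrite h; lra.
have uc : u c <= 0 by rewrite -ux0 u_mono // ltW.
have all0 z : 0 < z -> u z = 0.
  move=> z0; apply/eqP; rewrite eq_le u_ge0 // andbT.
  case: (leP z c) => zc; first by apply: le_trans uc; apply: u_mono.
  have := concave_up c0 (ltW zc); rewrite u1c mul0r addr0 => h.
  exact: le_trans h uc.
by case: hs => _ _ [z [z0 /eqP]]; rewrite all0.
Qed.

Lemma xu1_le {x} : 0 < x -> x * derive1 u x <= u x.
Proof.
move=> x0; rewrite leNgt; apply/negP => hlt.
have ux := u_pos x0.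
have u1p : 0 < derive1 u x.
  by rewrite -(pmulr_rgt0 _ x0); apply: lt_trans hlt.
set d := x * derive1 u x - u x.
have d0 : 0 < d by rewrite /d subr_gt0.
set de := d / (2 * derive1 u x).
have hde : derive1 u x * de = d / 2 by rewrite /de; field; rewrite gt_eqF.
have de0 : 0 < de by rewrite /de divr_gt0 // mulr_gt0.
have dex : de < x.
  rewrite -(ltr_pM2l u1p) hde; rewrite /d; lra.
have := concave_lo de0 (ltW dex).
have := u_pos de0.
have -> : derive1 u x * (x - de) = x * derive1 u x - d / 2.
  by rewrite mulrBr hde mulrC.
rewrite /d; lra.
Qed.


Lemma u_double {x y} : 0 < x -> x <= y -> y <= 2 * x -> u y <= 2 * u x.
Proof.
move=> x0 xy y2x; have := concave_up x0 xy.
have := xu1_le x0; have := u1_ge0 x0.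
have : derive1 u x * (y - x) <= derive1 u x * x.
  by rewrite ler_wpM2l ?u1_ge0 //; lra.
lra.
Qed.

Lemma f_ln {x} : 0 < x -> powR x sigma * powR (u x) p = expR (sigma * ln x + p * ln (u x)).
Proof.
by move=> x0; rewrite /powR gt_eqF // gt_eqF ?u_pos // expRD.
Qed.

Lemma mul_bnd (s d e : R) : 0 <= d <= e -> - (`|s| * e) <= s * d.
Proof.
move=> /andP[d0 de]; case: (lerP 0 s) => s0.
  rewrite ger0_norm //; have : 0 <= s * e by rewrite mulr_ge0 //; lra.
  by rewrite (le_trans _ (mulr_ge0 s0 d0)) // oppr_le0 mulr_ge0 // (le_trans d0).
rewrite ltr0_norm // mulNr opprK; by rewrite ler_wnM2l // ltW.
Qed.

Lemma key {x} : 0 < x ->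
  2 * ln x + sigma * ln x + p * ln (u x) - (`|sigma| + `|p|) * ln 2 <= ln (u x).
Proof.
move=> x0.
have x2 : x < 2 * x by lra.
have [c /andP[xc c2] E] := mvt_pos (@d2) x0 x2.
have c0 : 0 < c by exact: lt_trans xc.
have := ueq c0; rewrite f_ln // => Ec.
set L := sigma * ln c + p * ln (u c) in Ec.
have h1 : x * expR L <= derive1 u x.
  have := u1_ge0 (lt_trans x0 x2).
  have Ec' : derive1 (derive1 u) c = - expR L by rewrite -Ec opprK.
  move: E; rewrite Ec' (_ : 2 * x - x = x); last by ring.
  lra.
have h2 : x * x * expR L <= u x.
  apply: le_trans (xu1_le x0); rewrite -mulrA ler_pM2l //.
have pos : 0 < x * x * expR L by rewrite !mulr_gt0 ?expR_gt0.
have := h2; rewrite -ler_ln ?posrE ?u_pos // lnM ?posrE ?mulr_gt0 ?expR_gt0 //.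
rewrite lnM ?posrE // expRK => h3.
have l2 : 0 <= ln (2 : R) by rewrite ln_ge0 //; lra.
have lc1 : ln x <= ln c by rewrite ler_ln ?posrE // ltW.
have lc2 : ln c <= ln 2 + ln x by rewrite -lnM ?posrE // ler_ln ?posrE ?mulr_gt0 // ltW.
have uc1 : ln (u x) <= ln (u c) by rewrite ler_ln ?posrE ?u_pos // u_mono // ltW.
have uc2 : ln (u c) <= ln 2 + ln (u x).
  rewrite -lnM ?posrE ?u_pos // ler_ln ?posrE ?mulr_gt0 ?u_pos //.
  by apply: u_double; rewrite // ltW.
have m1 := @mul_bnd sigma (ln c - ln x) (ln 2).
have m2 := @mul_bnd p (ln (u c) - ln (u x)) (ln 2).
have : 0 <= ln c - ln x <= ln 2 by apply/andP; split; lra.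
have : 0 <= ln (u c) - ln (u x) <= ln 2 by apply/andP; split; lra.
move=> /m2 h4 /m1 h5.
rewrite /L in h3.
have e1 : sigma * (ln c - ln x) = sigma * ln c - sigma * ln x by ring.
have e2 : p * (ln (u c) - ln (u x)) = p * ln (u c) - p * ln (u x) by ring.
lra.
Qed.

Lemma bnd_ge1 {x} : 1 <= x -> u 1 <= u x <= u 1 * x.
Proof.
move=> x1; have o : (0 : R) < 1 by [].
apply/andP; split; first exact: u_mono.
have := concave_up o x1; have := xu1_le o; rewrite mul1r => h.
have : derive1 u 1 * (x - 1) <= u 1 * (x - 1) by rewrite ler_wpM2r //; lra.
lra.
Qed.

Lemma bnd_le1 {x} : 0 < x -> x <= 1 -> u 1 * x <= u x <= u 1.
Proof.
move=> x0 x1; apply/andP; split; last exact: u_mono.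
have := concave_up x0 x1; have := xu1_le x0 => h.
have : x * (derive1 u x * (1 - x)) <= u x * (1 - x) by rewrite mulrA ler_wpM2r //; lra.
move=> h2 h3.
have : x * u 1 <= x * (u x + derive1 u x * (1 - x)) by rewrite ler_wpM2l // ltW.
rewrite mulrDr; lra.
Qed.

Lemma exp_ln_div {x} (D : R) : 0 < x -> expR (D - ln x) = expR D / x.
Proof. by move=> x0; rewrite expRB lnK ?posrE. Qed.

Lemma G_inf1 (C : R) :
  (forall x, 1 <= x -> - ln x - C <= sigma * ln x + p * ln (u x)) -> False.
Proof.
move=> H.
set e := expR (- ln 2 - C).
have e0 : 0 < e := expR_gt0 _.
have step x : 1 <= x -> derive1 u (2 * x) <= derive1 u x - e.
  move=> x1; have x0 : 0 < x by exact: lt_le_trans x1.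
  have x2 : x < 2 * x by lra.
  have [c /andP[xc c2] E] := mvt_pos (@d2) x0 x2.
  have c0 : 0 < c by exact: lt_trans xc.
  have := ueq c0; rewrite f_ln // => Ec.
  have hc := H c (le_trans x1 (ltW xc)).
  have lc2 : ln c <= ln 2 + ln x by rewrite -lnM ?posrE // ler_ln ?posrE ?mulr_gt0 // ltW.
  have hb : e / x <= expR (sigma * ln c + p * ln (u c)).
    by rewrite /e -exp_ln_div // ler_expR; lra.
  have hb2 : e <= x * expR (sigma * ln c + p * ln (u c)).
    by move: hb; rewrite ler_pdivrMr // mulrC.
  have Ec' : derive1 (derive1 u) c = - expR (sigma * ln c + p * ln (u c)) by rewrite -Ec opprK.
  move: E; rewrite Ec' (_ : 2 * x - x = x); last by ring.
  lra.
have [n hn] := archi_ex (derive1 u 1) e0.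
have := dyad_up step n.
have := u1_ge0 (exprn_gt0 n (_ : (0 : R) < 2)).
have t2 : (0 : R) < 2 by [].
move=> /(_ t2); lra.
Qed.

Lemma G_01 (C B : R) :
  (forall x, 0 < x <= 1 -> - ln x - C <= sigma * ln x + p * ln (u x)) ->
  (forall x, 0 < x <= 1 -> u x <= B * x) -> False.
Proof.
move=> H HB.
set e := expR (- C).
have e0 : 0 < e := expR_gt0 _.
have step x : 0 < x <= 1 -> - derive1 u (x / 2) <= - derive1 u x - e / 2.
  move=> /andP[x0 x1].
  have y0 : 0 < x / 2 by rewrite divr_gt0.
  have x2 : x / 2 < x by lra.
  have [c /andP[xc c2] E] := mvt_pos (@d2) y0 x2.
  have c0 : 0 < c by exact: lt_trans xc.
  have := ueq c0; rewrite f_ln // => Ec.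
  have hc : - ln c - C <= sigma * ln c + p * ln (u c).
    by apply: H; rewrite c0 /=; apply: le_trans x1; apply: ltW.
  have lc2 : ln c <= ln x by rewrite ler_ln ?posrE // ltW.
  have hb : e / x <= expR (sigma * ln c + p * ln (u c)).
    by rewrite /e -exp_ln_div // ler_expR; lra.
  have hb2 : e <= x * expR (sigma * ln c + p * ln (u c)).
    by move: hb; rewrite ler_pdivrMr // mulrC.
  have Ec' : derive1 (derive1 u) c = - expR (sigma * ln c + p * ln (u c)) by rewrite -Ec opprK.
  move: E; rewrite Ec' (_ : x - x / 2 = x / 2); last by field.
  have : e / 2 <= expR (sigma * ln c + p * ln (u c)) * (x / 2).
    rewrite mulrA ler_pM2r //; lra.
  lra.
have o1 : (0 : R) < 1 by [].
have hB y : 0 < y <= 1 -> derive1 u y <= B.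
  move=> /andP[y0 y1]; have := xu1_le y0; have := HB y; rewrite y0 y1 => /(_ isT) h1 h2.
  have h3 : y * derive1 u y <= y * B by apply: (le_trans h2); rewrite mulrC.
  by rewrite -(ler_pM2l y0).
have e20 : 0 < e / 2 by rewrite divr_gt0.
have [n hn] := archi_ex (B - derive1 u 1) e20.
have := dyad_down o1 step n.
have hy : 0 < 1 / (2 : R) ^+ n <= 1.
  apply/andP; split; first by rewrite divr_gt0 // exprn_gt0.
  rewrite ler_pdivrMr ?exprn_gt0 // mul1r exprn_ege1 //; lra.
have := hB _ hy.
lra.
Qed.

Lemma G_inf2 (C B : R) :
  (forall x, 1 <= x -> - ln x - ln x - C <= sigma * ln x + p * ln (u x)) ->
  (forall x, 1 <= x -> u x <= B) -> False.
Proof.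
move=> H HB.
set e := expR (- ln 2 - ln 2 - C).
have e0 : 0 < e := expR_gt0 _.
have step1 x : 1 <= x -> e / x <= derive1 u x.
  move=> x1; have x0 : 0 < x by exact: lt_le_trans x1.
  have x2 : x < 2 * x by lra.
  have [c /andP[xc c2] E] := mvt_pos (@d2) x0 x2.
  have c0 : 0 < c by exact: lt_trans xc.
  have := ueq c0; rewrite f_ln // => Ec.
  have hc := H c (le_trans x1 (ltW xc)).
  have lc2 : ln c <= ln 2 + ln x by rewrite -lnM ?posrE // ler_ln ?posrE ?mulr_gt0 // ltW.
  have hb : e / x / x <= expR (sigma * ln c + p * ln (u c)).
    by rewrite /e -!exp_ln_div // ler_expR; lra.
  have hb2 : e / x <= x * expR (sigma * ln c + p * ln (u c)).
    by move: hb; rewrite ler_pdivrMr // [_ * x]mulrC.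
  have Ec' : derive1 (derive1 u) c = - expR (sigma * ln c + p * ln (u c)) by rewrite -Ec opprK.
  move: E; rewrite Ec' (_ : 2 * x - x = x); last by ring.
  have := u1_ge0 (lt_trans x0 x2).
  lra.
have step x : 1 <= x -> - u (2 * x) <= - u x - e / 2.
  move=> x1; have x0 : 0 < x by exact: lt_le_trans x1.
  have x2 : x <= 2 * x by lra.
  have := concave_lo x0 x2.
  have := step1 (2 * x) (_ : 1 <= 2 * x); rewrite (_ : 2 * x - x = x); last by ring.
  have ee : e / (2 * x) * x = e / 2 by field; rewrite gt_eqF.
  move=> /(_ (le_trans x1 x2)) h1.
  have : e / (2 * x) * x <= derive1 u (2 * x) * x by rewrite ler_pM2r.
  lra.
have e20 : 0 < e / 2 by rewrite divr_gt0.
have [n hn] := archi_ex B e20.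
have := dyad_up step n.
have t2 : (1 : R) <= 2 by lra.
have h1 := u_pos (@ltr01 R).
have h2 := HB _ (exprn_ege1 n t2).
lra.
Qed.

Lemma G_02 (C : R) :
  (forall x, 0 < x <= 1 -> - ln x - ln x - C <= sigma * ln x + p * ln (u x)) -> False.
Proof.
move=> H.
set e := expR (- C).
have e0 : 0 < e := expR_gt0 _.
have step1 x : 0 < x <= 1 -> e / x / 2 <= derive1 u (x / 2).
  move=> /andP[x0 x1].
  have y0 : 0 < x / 2 by rewrite divr_gt0.
  have x2 : x / 2 < x by lra.
  have [c /andP[xc c2] E] := mvt_pos (@d2) y0 x2.
  have c0 : 0 < c by exact: lt_trans xc.
  have := ueq c0; rewrite f_ln // => Ec.
  have hc : - ln c - ln c - C <= sigma * ln c + p * ln (u c).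
    by apply: H; rewrite c0 /=; apply: le_trans x1; apply: ltW.
  have lc2 : ln c <= ln x by rewrite ler_ln ?posrE // ltW.
  have hb : e / x / x <= expR (sigma * ln c + p * ln (u c)).
    by rewrite /e -!exp_ln_div // ler_expR; lra.
  have hb2 : e / x / 2 <= expR (sigma * ln c + p * ln (u c)) * (x / 2).
    have : e / x / x * (x / 2) = e / x / 2 by field; rewrite gt_eqF.
    have : e / x / x * (x / 2) <= expR (sigma * ln c + p * ln (u c)) * (x / 2).
      by rewrite ler_pM2r.
    lra.
  have Ec' : derive1 (derive1 u) c = - expR (sigma * ln c + p * ln (u c)) by rewrite -Ec opprK.
  move: E; rewrite Ec' (_ : x - x / 2 = x / 2); last by field.
  have := u1_ge0 x0.
  lra.
have h2 : (0 : R) < 1 / 2 by [].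
have step y : 0 < y <= 1 / 2 -> u (y / 2) <= u y - e / 8.
  move=> /andP[y0 y1].
  have hy : 0 < 2 * y <= 1 by apply/andP; split; lra.
  have := step1 _ hy; rewrite (_ : 2 * y / 2 = y); last by field.
  have y20 : 0 < y / 2 by rewrite divr_gt0.
  have := concave_lo y20 (_ : y / 2 <= y); rewrite (_ : y - y / 2 = y / 2); last by field.
  have ee : e / (2 * y) / 2 * (y / 2) = e / 8 by field; rewrite gt_eqF.
  move=> /(_ (ltW (_ : y / 2 < y))) h1 h3.
  have : e / (2 * y) / 2 * (y / 2) <= derive1 u y * (y / 2) by rewrite ler_pM2r.
  have : y / 2 < y by lra.
  move=> /h1; lra.
have e80 : 0 < e / 8 by rewrite divr_gt0.
have [n hn] := archi_ex (u (1 / 2)) e80.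
have := dyad_down h2 step n.
have hp : 0 < 1 / 2 / (2 : R) ^+ n by rewrite divr_gt0 // exprn_gt0.
have := u_pos hp; lra.
Qed.

Lemma G_rc : sigma = -2 -> p = 1 -> False.
Proof.
move=> es ep.
have u2E (x : R) : 0 < x -> derive1 (derive1 u) x = - (u x / x / x).
  move=> x0; apply: oppr_inj; rewrite opprK ueq // f_ln // es ep mul1r.
  rewrite (_ : -2 * ln x + ln (u x) = (ln (u x) - ln x) - ln x); last by ring.
  by rewrite !exp_ln_div // lnK ?posrE ?u_pos.
pose r := fun y => y * derive1 u y * (u y)^-1.
pose D := fun x => x * derive1 u x * (- (u x) ^- 2 * derive1 u x) +
                   (u x)^-1 * (x * derive1 (derive1 u) x + derive1 u x).
have isd (x : R) : 0 < x -> is_derive x 1 r (D x).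
  move=> x0.
  have h1 : is_derive x 1 (fun y : R => y) 1 := is_derive_id x 1.
  have h2 : is_derive x 1 (derive1 u) (derive1 (derive1 u) x).
    by rewrite derive1E; apply: derivableP; apply: d2.
  have h3 := is_deriveM h1 h2.
  have h4 : is_derive x 1 u (derive1 u x).
    by rewrite derive1E; apply: derivableP; apply: d1.
  have h5 := is_deriveV (negbT (gt_eqF (u_pos x0))) h4.
  have h6 := is_deriveM h3 h5.
  have -> : r = (id * derive1 u) * (fun y => (u y)^-1) by apply: funext.
  apply: is_derive_eq h6 _.
  rewrite /D.
  change (x * derive1 u x * (- (u x) ^- 2 * derive1 u x) + (u x)^-1 * (x * derive1 (derive1 u) x + derive1 u x * 1) = x * derive1 u x * (- (u x) ^- 2 * derive1 u x) + (u x)^-1 * (x * derive1 (derive1 u) x + derive1 u x)).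
  by rewrite mulr1.
have dr (x : R) : 0 < x -> derivable r x 1 by move=> x0; have := isd x x0; case.
have dv (x : R) : 0 < x -> derive1 r x = D x.
  by move=> x0; rewrite derive1E; have := isd x x0; case.
have r0 (x : R) : 0 < x -> 0 <= r x.
  move=> x0; rewrite /r mulr_ge0 ?invr_ge0 ?mulr_ge0 ?u1_ge0 ?ltW ?u_pos //.
have cD (c : R) : 0 < c -> c * D c <= - (3 / 4).
  move=> c0.
  set rho := c * derive1 u c / u c.
  have uc := u_pos c0.
  have -> : c * D c = - (rho ^+ 2 - rho + 1).
    by rewrite /D /= u2E // /rho; field; rewrite !gt_eqF.
  have := sqr_ge0 (rho - 1 / 2); lra.
have step x : 1 <= x -> r (2 * x) <= r x - 3 / 8.
  move=> x1; have x0 : 0 < x by exact: lt_le_trans x1.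
  have x2 : x < 2 * x by lra.
  have [c /andP[xc c2] E] := mvt_pos dr x0 x2.
  have c0 : 0 < c by exact: lt_trans xc.
  move: E; rewrite dv // (_ : 2 * x - x = x); last by ring.
  have h := cD c c0.
  have Dn : D c <= 0.
    rewrite leNgt; apply/negP => Dp.
    have : 0 < c * D c by rewrite mulr_gt0.
    lra.
  have : D c * (x - c / 2) <= 0 by rewrite mulr_le0_ge0 //; lra.
  lra.
have e0 : (0 : R) < 3 / 8 by [].
have [n hn] := archi_ex (r 1) e0.
have := dyad_up step n.
have t2 : (0 : R) < 2 by [].
have := r0 _ (exprn_gt0 n t2); lra.
Qed.

Lemma lnb_ge1 {x} : 1 <= x -> ln (u 1) <= ln (u x) <= ln (u 1) + ln x.
Proof.
move=> x1; have x0 : 0 < x by exact: lt_le_trans x1.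
have o : (0 : R) < 1 by [].
have /andP[h1 h2] := bnd_ge1 x1.
rewrite -lnM ?posrE ?u_pos // !ler_ln ?posrE ?mulr_gt0 ?u_pos // h1 h2 //.
Qed.

Lemma lnb_le1 {x} : 0 < x -> x <= 1 -> ln (u 1) + ln x <= ln (u x) <= ln (u 1).
Proof.
move=> x0 x1.
have o : (0 : R) < 1 by [].
have /andP[h1 h2] := bnd_le1 x0 x1.
rewrite -lnM ?posrE ?u_pos // !ler_ln ?posrE ?mulr_gt0 ?u_pos // h1 h2 //.
Qed.

Lemma key2 {x} : 0 < x ->
  (sigma + 2) * ln x - (`|sigma| + `|p|) * ln 2 <= (1 - p) * ln (u x).
Proof. move=> x0; have := key x0; lra. Qed.

Local Notation k := ((`|sigma| + `|p|) * ln 2).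
Local Notation A := (ln (u 1)).

Lemma crit0 : sigma + 2 = 0 -> False.
Proof.
move=> s0; have es : sigma = -2 by lra.
case: (ltgtP p 1) => p1; last exact: G_rc.
-
  have p0 : 0 < 1 - p by lra.
  apply: (@G_02 (`|p| * (`|- k / (1 - p)| + `|A|))) => x /andP[x0 x1].
  have := key2 x0; rewrite s0 mul0r sub0r => h.
  have h1 : - k / (1 - p) <= ln (u x) by apply: lb_div.
  have /andP[_ h2] := lnb_le1 x0 x1.
  have := pl_bnd p h1 h2; rewrite es; lra.
-
  have p0 : 0 < p - 1 by lra.
  apply: (@G_inf2 (- (p * A)) (expR (k / (p - 1)))).
    move=> x x1; have /andP[h1 _] := lnb_ge1 x1.
    have : p * A <= p * ln (u x) by rewrite ler_wpM2l //; lra.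
    rewrite es; lra.
  move=> x x1; have x0 : 0 < x by exact: lt_le_trans x1.
  have := key2 x0; rewrite s0 mul0r sub0r => h.
  have h1 : ln (u x) <= k / (p - 1) by apply: ub_div => //; lra.
  by rewrite -[u x]lnK ?posrE ?u_pos // ler_expR.
Qed.

Lemma crit1 : sigma + 2 = 1 - p -> sigma + 2 != 0 -> False.
Proof.
move=> s1 s0.
case: (ltgtP p 1) => p1; last by move: s0; rewrite s1 p1 subrr eqxx.
-
  have p0 : 0 < 1 - p by lra.
  apply: (@G_inf1 (`|p| * (`|- k / (1 - p)| + `|A|))) => x x1.
  have x0 : 0 < x by exact: lt_le_trans x1.
  have := key2 x0; rewrite s1 => h.
  have h1 : - k / (1 - p) <= ln (u x) - ln x by apply: lb_div => //; lra.
  have /andP[_ h2] := lnb_ge1 x1.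
  have h3 : ln (u x) - ln x <= A by lra.
  have := pl_bnd p h1 h3.
  have e : sigma = -1 - p by lra.
  rewrite e; lra.
-
  have p0 : 0 < p - 1 by lra.
  apply: (@G_01 (`|p| * (`|k / (p - 1)| + `|A|)) (expR (k / (p - 1)))).
    move=> x /andP[x0 x1].
    have := key2 x0; rewrite s1 => h.
    have h1 : ln (u x) - ln x <= k / (p - 1) by apply: ub_div => //; lra.
    have /andP[h2 _] := lnb_le1 x0 x1.
    have h3 : A <= ln (u x) - ln x by lra.
    have := pl_bnd p h3 h1.
    have e : sigma = -1 - p by lra.
    rewrite e; lra.
  move=> x /andP[x0 x1].
  have := key2 x0; rewrite s1 => h.
  have h1 : ln (u x) - ln x <= k / (p - 1) by apply: ub_div => //; lra.
  rewrite -[u x]lnK ?posrE ?u_pos // -[x in _ <= _ * x]lnK ?posrE // -expRD ler_expR.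
  lra.
Qed.

Lemma necessity : (sigma < -2 /\ p > -1 - sigma) \/ (sigma > -2 /\ p < -1 - sigma).
Proof.
have H t : 2 * t + sigma * t + p * ln (u (expR t)) - k <= ln (u (expR t)).
  by have := key (expR_gt0 t); rewrite expRK.
have Hp t : 0 <= t -> ln (u 1) <= ln (u (expR t)) <= ln (u 1) + t.
  move=> t0; have : 1 <= expR t by rewrite -expR0 ler_expR.
  by move=> /lnb_ge1; rewrite expRK.
have Hn t : t <= 0 -> ln (u 1) + t <= ln (u (expR t)) <= ln (u 1).
  move=> t0; have : expR t <= 1 by rewrite -expR0 ler_expR.
  by move=> /(lnb_le1 (expR_gt0 t)); rewrite expRK.
have [s0|[s1|[r|r]]] := @arith_nc R p sigma A k (fun t => ln (u (expR t))) H Hp Hn.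
- by exfalso; apply: crit0.
- exfalso; apply: (crit1 s1); apply/eqP => s0; exact: crit0.
- by left.
- by right.
Qed.

End Nec.

Lemma near_pos {R : realType} (f g : R -> R) (x : R) : 0 < x ->
  (forall y, 0 < y -> f y = g y) -> \forall y \near x, f y = g y.
Proof.
move=> x0 H; near=> y; apply: H; near: y; exact: lt_nbhsr.
Unshelve. all: by end_near.
Qed.

Lemma C2_of {R : realType} {v v1 v2 : R -> R} :
  (forall x : R, 0 < x -> is_derive x 1 v (v1 x)) ->
  (forall x : R, 0 < x -> is_derive x 1 v1 (v2 x)) ->
  (forall x : R, 0 < x -> derivable v2 x 1) ->
  C2_pos v /\ (forall x, 0 < x -> derive1 (derive1 v) x = v2 x).
Proof.
move=> h1 h2 h3.
have e1 (y : R) : 0 < y -> derive1 v y = v1 y.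
  by move=> y0; rewrite derive1E; case: (h1 y y0).
have e2 (y : R) : 0 < y -> derive1 (derive1 v) y = v2 y.
  move=> y0; rewrite derive1E.
  rewrite (@near_eq_derive _ _ _ _ v1); first by case: (h2 y y0).
  by apply: near_pos => // z z0; rewrite e1.
split => // x x0; split.
- by case: (h1 x x0).
- apply: (@near_eq_derivable _ _ _ v1); last by case: (h2 x x0).
  by apply: near_pos => // z z0; rewrite e1.
- have d : derivable (derive1 (derive1 v)) x 1.
    apply: (@near_eq_derivable _ _ _ v2); last exact: h3.
    by apply: near_pos => // z z0; rewrite e2.
  by apply/differentiable_continuous; rewrite -derivable1_diffP.
Qed.

Lemma sufficiency (R : realType) (p sigma : R) :
  (sigma < -2 /\ p > -1 - sigma) \/ (sigma > -2 /\ p < -1 - sigma) ->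
  exists u : R -> R, is_nontriv_nonneg_sol p sigma u.
Proof.
move=> hc.
have p1 : p - 1 != 0 by apply/eqP => e; case: hc => -[]; lra.
have p1' : 1 - p != 0 by apply/eqP => e; case: hc => -[]; lra.
set b := (sigma + 2) / (1 - p).
have bq : b * (1 - p) = sigma + 2 by rewrite /b; field.
have [b0 b1] : 0 < b /\ b < 1 by case: hc => -[]; split; nra.
set m := b * (1 - b).
have m0 : 0 < m by rewrite /m mulr_gt0 // subr_gt0.
set lC := ln m / (p - 1).
set C := expR lC.
have C0 : 0 < C := expR_gt0 _.
pose v := fun x : R => C * powR x b.
pose v1 := fun x : R => C * (b * powR x (b - 1)).
pose v2 := fun x : R => C * ((b - 1) * (b * powR x (b - 1 - 1))).
pose v3 := fun x : R => C * ((b - 1 - 1) * ((b - 1) * (b * powR x (b - 1 - 1 - 1)))).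
have hd (a k x : R) : 0 < x -> is_derive x 1 (fun y => k * powR y a) (k * (a * powR x (a - 1))).
  move=> x0.
  have -> : (fun y => k * powR y a) = k \*: (@powR R ^~ a) by apply: funext.
  have hp : is_derive x 1 (@powR R ^~ a) (a * powR x (a - 1)) by apply: is_derive1_powR.
  exact: (is_derive_eq (is_deriveZ k hp)).
have h1 (x : R) : 0 < x -> is_derive x 1 v (v1 x) by move=> x0; exact: hd.
have h2 (x : R) : 0 < x -> is_derive x 1 v1 (v2 x).
  move=> x0.
  have -> : v1 = (fun y => C * b * powR y (b - 1)) by apply: funext => y; rewrite /v1 mulrA.
  apply: is_derive_eq (hd (b - 1) (C * b) x x0) _.
  by rewrite /v2; ring.
have h3 (x : R) : 0 < x -> derivable v2 x 1.
  move=> x0; have := hd (b - 1 - 1) (C * ((b - 1) * b)) x x0.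
  have -> : (fun y => C * ((b - 1) * b) * powR y (b - 1 - 1)) = v2.
    by apply: funext => y; rewrite /v2 !mulrA.
  by case.
have [hC2 hE] := C2_of h1 h2 h3.
exists v; split => //.
- by move=> x x0; rewrite /v mulr_ge0 ?powR_ge0 // ltW.
- exists 1; split => //; rewrite /v powR1 mulr1; exact: lt0r_neq0.
- by move=> _ x x0; rewrite /v mulr_gt0 // powR_gt0.
- move=> x x0; rewrite hE // /v2.
  have vx : 0 < C * powR x b by rewrite mulr_gt0 // powR_gt0.
  have ex : powR x sigma = expR (sigma * ln x) by rewrite /powR gt_eqF.
  have lw : ln (powR x b) = b * ln x by rewrite ln_powR.
  have ev : powR (v x) p = expR (p * (lC + b * ln x)).
    rewrite /v; set w := powR x b; rewrite {1}/powR gt_eqF //.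
    by rewrite lnM ?posrE ?powR_gt0 // lw /C expRK.
  have ex2 : powR x (b - 1 - 1) = expR ((b - 1 - 1) * ln x) by rewrite /powR gt_eqF.
  rewrite ex ev ex2.
  have -> : - (expR lC * ((b - 1) * (b * expR ((b - 1 - 1) * ln x)))) =
            expR lC * expR (ln m) * expR ((b - 1 - 1) * ln x).
    by rewrite lnK ?posrE // /m; ring.
  rewrite -!expRD; congr expR.
  have : lC * (p - 1) = ln m by rewrite /lC; field.
  have e2 : sigma = b * (1 - p) - 2 by rewrite bq; ring.
  move=> e1; rewrite -e1 e2; ring.
Qed.

Local Close Scope classical_set_scope.

Theorem theorem1p3 (R : realType) (p sigma : R) :
  (exists u : R -> R, is_nontriv_nonneg_sol p sigma u) <->
  ((sigma < -2 /\ p > -1 - sigma) \/ (sigma > -2 /\ p < -1 - sigma)).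
Proof.
split; first by case=> u hu; exact: (@necessity R p sigma u hu).
exact: sufficiency.
Qed.
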